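(* Let $D$ be a finite directed graph that is essentially a tree, with at least two vertices, and let $v$ be a leaf of $D$, i.e. there is a unique vertex $x$ such that every edge of $D$ incident to $v$ is $\overrightarrow{vx}$ or $\overrightarrow{xv}$ (at least one of these is in $E(D)$). Let $D'=D\setminus\{v\}$ (delete $v$ and its incident edges), let $y_1,\ldots,y_k$ be the vertices $y$ of $D'$ with $\overrightarrow{yx}\in E(D')$, indexed so that $\overrightarrow{xy_i}\in E(D)$ exactly for $i=1,\ldots,s$ ($0\le s\le k$). Let $D_0=D'\setminus\{\overrightarrow{y_1x},\ldots,\overrightarrow{y_kx}\}$ and, for $p=1,\ldots,k$, let $D_p=D_0\setminus\{\overrightarrow{xy_p}\}$ (so $D_p=D_0$ for $p>s$). Let $F_1,\ldots,F_t$ be a shelling order of $\Delta(D')$, $H_1,\ldots,H_q$ a shelling order of $\Delta(D_0)$, and for each $p$ let $G^p_1,\ldots,G^p_{t_p}$ be a shelling order of $\Delta(D_p)$. Then: (a) If $\overrightarrow{xv}\in E(D)$ and $\overrightarrow{vx}\notin E(D)$, then $F_1\cup\{\overrightarrow{xv}\},\ldots,F_t\cup\{\overrightarrow{xv}\}$ is a shelling order of $\Delta(D)$, and $h_{i,j}(\Delta(D))=h_{i-1,j}(\Delta(D'))$ for all $i,j$. (b) If $\overrightarrow{xv}\notin E(D)$ and $\overrightarrow{vx}\in E(D)$, then $$H_1\cup\{\overrightarrow{vx}\},\ldots,H_q\cup\{\overrightarrow{vx}\},G^1_1\cup\{\overrightarrow{y_1x}\},\ldots,G^1_{t_1}\cup\{\overrightarrow{y_1x}\},\ldots,G^k_1\cup\{\overrightarrow{y_kx}\},\ldots,G^k_{t_k}\cup\{\overrightarrow{y_kx}\}$$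 is a shelling order of $\Delta(D)$, and $h_{i,j}(\Delta(D))=h_{i-1,j}(\Delta(D_0))+\sum_{p=1}^k h_{i-1,j-1}(\Delta(D_p))$. (c) If $\overrightarrow{xv},\overrightarrow{vx}\in E(D)$, then $$F_1\cup\{\overrightarrow{xv}\},\ldots,F_t\cup\{\overrightarrow{xv}\},H_1\cup\{\overrightarrow{vx}\},\ldots,H_q\cup\{\overrightarrow{vx}\}$$ is a shelling order of $\Delta(D)$, and $h_{i,j}(\Delta(D))=h_{i-1,j}(\Delta(D'))+h_{i-1,j-1}(\Delta(D_0))$.
   Context: For a finite directed graph $D$ (no loops, no multiple edges), $\Delta(D)$ has the directed edges of $D$ as vertices and the edge sets of directed forests in $D$ (vertex-disjoint unions of rooted directed trees; equivalently, edge sets in which every vertex has in-degree at most $1$ and there is no directed cycle) as faces. $D$ is essentially a tree if replacing every directed edge, or pair of opposite directed edges, by one undirected edge yields a tree. A (possibly nonpure) complex is shellable with shelling order $F_1,\ldots,F_k$ of its facets if for all $i<j$ there exist $l<j$ and $v\in F_j$ with $F_i\cap F_j\subseteq F_l\cap F_j=F_j\setminus\{v\}$. For a complex $\Delta$, $f_{i,j}(\Delta)$ is the number of faces $A$ with $|A|=j$ such that the largest face containing $A$ has $i$ vertices, and the $h$-triangle is $h_{i,j}(\Delta)=\sum_{k=0}^{j}(-1)^{j-k}{i-k\choose j-k}f_{i,k}(\Delta)$. *)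

(* Defs.v *)
From HB Require Import structures.
From mathcomp Require Import all_boot all_order all_algebra.
Set Implicit Arguments. Unset Strict Implicit. Unset Printing Implicit Defensive.
Import Order.TTheory GRing.Theory Num.Theory.

Section Complex.
Variable T : finType.
Implicit Types (C : {set {set T}}) (A F : {set T}).

Definition facets C : {set {set T}} :=
  [set F in C | [forall G in C, (F \subset G) ==> (G == F)]].

Definition shelling_order C (s : seq {set T}) : Prop :=
  [/\ uniq s,
      (forall F, (F \in s) = (F \in facets C)) &
      (forall i j, i < j -> j < size s ->
         exists l, l < j /\
           exists w, w \in nth set0 s j /\
             (nth set0 s i :&: nth set0 s j) \subset (nth set0 s l :&: nth set0 s j) /\
             nth set0 s l :&: nth set0 s j = nth set0 s j :\ w)].

Definition top_size C A : nat := \max_(F in C | A \subset F) #|F|.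

Definition fT C (i j : nat) : nat :=
  #|[set A in C | (#|A| == j) && (top_size C A == i)]|.

Definition hT_nat C (i j : nat) : int :=
  (\sum_(k < j.+1) (-1) ^+ (j - k) * ('C(i - k, j - k))%:Z * (fT C i k)%:Z)%R.

Definition hT C (i j : int) : int :=
  match i, j with
  | Posz a, Posz b => hT_nat C a b
  | _, _ => 0%R
  end.
End Complex.

Section Digraph.
Variable V : finType.
Implicit Types (W : {set V}) (E A : {set V * V}).

Definition dforest A : bool :=
  [forall w : V, #|[set e in A | e.2 == w]| <= 1] &&
  [forall e in A, ~~ connect [rel a b | (a, b) \in A] e.2 e.1].

Definition Delta E : {set {set V * V}} := [set A : {set V * V} | (A \subset E) && dforest A].

Definition digraph W E : Prop :=
  E \subset setX W W /\ forall a, (a, a) \notin E.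

Definition uedges E : {set {set V}} := [set [set e.1; e.2] | e in E].
Definition uadj E : rel V := [rel a b | ((a, b) \in E) || ((b, a) \in E)].

Definition ess_tree W E : Prop :=
  [/\ W != set0,
      (forall a b, a \in W -> b \in W -> connect (uadj E) a b) &
      #|uedges E| = #|W| - 1].

Definition del_vertex E (v : V) : {set V * V} :=
  [set e in E | (e.1 != v) && (e.2 != v)].
End Digraph.

(* Main.v *)
Require Import Defs.
From mathcomp Require Import all_boot all_order all_algebra.
From mathcomp Require Import ring zify.
Set Implicit Arguments. Unset Strict Implicit. Unset Printing Implicit Defensive.
Set Implicit Arguments. Unset Strict Implicit. Unset Printing Implicit Defensive.

Section Gen.
Variable T : finType.
Implicit Types (K C : {set {set T}}) (X Y F a b : {set T}).

Lemma top_ge K X F : F \in K -> X \subset F -> #|F| <= top_size K X.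
Proof. by move=> FK XF; apply: (@leq_bigmax_cond _ (fun F => (F \in K) && (X \subset F))) => //; rewrite FK. Qed.

Lemma top_att K X : X \in K -> exists2 F, (F \in K) && (X \subset F) & top_size K X = #|F|.
Proof.
move=> XK; have h : 0 < #|[pred F | (F \in K) && (X \subset F)]|.
  by apply/card_gt0P; exists X; rewrite inE XK subxx.
by case: (eq_bigmax_cond (fun F : {set T} => #|F|) h) => F FK eqF; exists F.
Qed.

Lemma top_le K X m : (forall F, F \in K -> X \subset F -> #|F| <= m) -> top_size K X <= m.
Proof. by move=> H; apply/bigmax_leqP => F /andP[]; apply: H. Qed.

Lemma top_self K X : X \in K -> #|X| <= top_size K X.
Proof. by move=> XK; apply: top_ge. Qed.

Lemma sub_U1 X Y t : X \subset Y :|: [set t] -> t \notin X -> X \subset Y.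
Proof.
move=> h tX; apply/subsetP => z zX; have := subsetP h z zX.
by rewrite in_setU in_set1; case/orP => // /eqP zt; move: tX; rewrite -zt zX.
Qed.

Lemma card_U1 X t : t \notin X -> #|X :|: [set t]| = #|X|.+1.
Proof. by move=> tX; rewrite setUC cardsU1 tX. Qed.

Lemma U1_inj X Y t : t \notin X -> t \notin Y -> X :|: [set t] = Y :|: [set t] -> X = Y.
Proof.
move=> tX tY h; apply/eqP; rewrite eqEsubset; apply/andP; split.
  by apply: (sub_U1 _ tX); rewrite -h subsetUl.
by apply: (sub_U1 _ tY); rewrite h subsetUl.
Qed.

Definition cone t K := [set k :|: [set t] | k in K].

Lemma mem_bigcup_seq (I : eqType) (ys : seq I) (S : I -> {set {set T}}) X :
  (X \in \bigcup_(y <- ys) S y) = has (fun y => X \in S y) ys.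
Proof. elim: ys => [|y ys IH]; first by rewrite big_nil in_set0. by rewrite big_cons in_setU IH. Qed.

End Gen.

Lemma sumU (U : finType) (A B : {set U}) (g : U -> nat) : [disjoint A & B] ->
  \sum_(X in A :|: B) g X = \sum_(X in A) g X + \sum_(X in B) g X.
Proof. by move=> d; rewrite -bigU //; apply: eq_bigl => X; rewrite in_setU. Qed.

Lemma mydisj (U : finType) (A B : {pred U}) : (forall x, x \in A -> x \in B -> False) -> [disjoint A & B].
Proof. by move=> h; rewrite disjoint_subset; apply/subsetP => x xA; rewrite inE; apply/negP => xB; apply: h xA xB. Qed.

Lemma sum_bigcup (U : finType) (I : eqType) (zs : seq I) (S : I -> {set U}) (g : U -> nat) :
  uniq zs -> {in zs &, forall z z', z != z' -> [disjoint S z & S z']} ->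
  \sum_(X in \bigcup_(z <- zs) S z) g X = \sum_(z <- zs) \sum_(X in S z) g X.
Proof.
elim: zs => [|z zs IH] /=; first by rewrite big_nil big_set0 big_nil.
case/andP=> zn u hd; rewrite big_cons sumU ?big_cons ?IH //.
- by move=> a b az bz; apply: hd; rewrite inE ?az ?bz orbT.
apply/mydisj => X XS; elim: zs zn hd {IH u} => [|z' zs IH2]; first by rewrite big_nil in_set0.
rewrite inE negb_or big_cons in_setU => /andP[zz' zn] hd; case/orP.
  by rewrite (disjointFr (hd _ _ _ _ zz')) // !inE eqxx ?orbT.
apply: IH2 => // a b; rewrite !inE => ha hb; apply: hd; rewrite !inE.
  by case/orP: ha => ->; rewrite ?orbT.
by case/orP: hb => ->; rewrite ?orbT.
Qed.

Lemma fT_sum (T : finType) (K : {set {set T}}) i k :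
  fT K i k = \sum_(X in K) ((#|X| == k) && (top_size K X == i) : nat).
Proof.
rewrite /fT -sum1_card [LHS]big_mkcond [RHS]big_mkcond /=; apply: eq_bigr => X _.
by rewrite inE; case: (X \in K); case: ((#|X| == k) && (top_size K X == i)).
Qed.

Set Implicit Arguments. Unset Strict Implicit. Unset Printing Implicit Defensive.

Definition sgood (T : finType) (prev t : seq {set T}) : Prop :=
  forall n, n < size t -> forall G, G \in prev ++ take n t ->
   exists H, H \in prev ++ take n t /\ exists w, w \in nth set0 t n /\
     G :&: nth set0 t n \subset H :&: nth set0 t n /\ H :&: nth set0 t n = nth set0 t n :\ w.

Lemma shell_of_good (T : finType) (C : {set {set T}}) s : uniq s ->
  (forall F, (F \in s) = (F \in facets C)) -> sgood [::] s -> shelling_order C s.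
Proof.
move=> us ms g; split => // i j ij js.
have tj : size (take j s) = j by rewrite size_takel // ltnW.
have Gin : nth set0 s i \in [::] ++ take j s.
  by rewrite /= -(nth_take set0 ij); apply: mem_nth; rewrite tj.
have [H [Hin [w [wF [s1 s2]]]]] := g j js _ Gin.
exists (index H (take j s)); split; first by rewrite -{2}tj index_mem.
exists w; have eH : nth set0 s (index H (take j s)) = H.
  by rewrite -(nth_take set0 (_ : index H (take j s) < j)) ?nth_index // -{2}tj index_mem.
by rewrite eH.
Qed.

Lemma good_of_shell (T : finType) (C : {set {set T}}) s :
  shelling_order C s -> sgood [::] s.
Proof.
case=> us ms sh n ns G /= Gin.
have tn : size (take n s) = n by rewrite size_takel // ltnW.
have il : index G (take n s) < n by rewrite -{2}tn index_mem.
have eG : nth set0 s (index G (take n s)) = G by rewrite -(nth_take set0 il) nth_index.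
have [l [ln [w [wF [s1 s2]]]]] := sh _ _ il ns.
exists (nth set0 s l); split.
  by rewrite -(nth_take set0 ln); apply: mem_nth; rewrite tn.
by exists w; rewrite -eG.
Qed.

Lemma sgood_cat (T : finType) (prev t u : seq {set T}) :
  sgood prev t -> sgood (prev ++ t) u -> sgood prev (t ++ u).
Proof.
move=> gt gu n; rewrite size_cat => nlt G; rewrite take_cat nth_cat.
case: ltnP => hn; first by apply: gt.
rewrite catA => Gin; apply: gu => //; by rewrite -(ltn_add2l (size t)) subnKC.
Qed.

Lemma capU1 (T : finType) (a b : {set T}) (f : T) : f \notin b ->
  (a :|: [set f]) :&: (b :|: [set f]) = (a :&: b) :|: [set f].
Proof. by move=> _; rewrite setUIl. Qed.

Lemma sgood_map (T : finType) (prev sB : seq {set T}) (f : T) :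
  sgood [::] sB -> (forall b, b \in sB -> f \notin b) ->
  (forall G, G \in prev -> f \notin G) ->
  (forall b G, b \in sB -> G \in prev -> exists2 H, H \in prev & H :&: (b :|: [set f]) = b) ->
  sgood prev [seq b :|: [set f] | b <- sB].
Proof.
move=> gB fb fG hH n; rewrite size_map => ns G; rewrite (nth_map set0) // -map_take mem_cat.
have bn := mem_nth set0 ns.
case/orP=> [Gp|].
  have [H Hp eH] := hH _ _ bn Gp; exists H; rewrite mem_cat Hp; split => //.
  exists f; rewrite in_setU set11 orbT; split => //; rewrite eH.
  split; last by rewrite setDUl setDv setU0; apply/esym/setDidPl; rewrite disjoint_sym disjoints1 fb.
  apply/subsetP => z; rewrite !inE => /andP[zG /orP[//|zf]].
  by move: (fG _ Gp); rewrite -(eqP zf) zG.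
case/mapP=> g gin ->.
have [H [Hin [w [wb [s1 s2]]]]] := gB n ns g gin.
exists (H :|: [set f]); split; first by rewrite mem_cat; apply/orP; right; apply/map_f.
have wf : w != f by apply/eqP => ew; move: (fb _ bn); rewrite -ew wb.
exists w; split; first by rewrite in_setU wb.
rewrite !capU1 ?fb //; split; first by apply: setSU.
rewrite s2; apply/setP => z; rewrite !inE; case: (z =P f) => [->|]; first by rewrite eq_sym wf orbT.
by rewrite !orbF.
Qed.

Lemma facetP (T : finType) (K : {set {set T}}) X :
  X \in facets K <-> X \in K /\ (forall G, G \in K -> X \subset G -> G = X).
Proof.
rewrite inE; split.
  case/andP=> XK /forall_inP h; split => // G GK XG; apply/eqP.
  by move: (h G GK); rewrite XG.
case=> XK h; rewrite XK; apply/forall_inP => G GK; apply/implyP => XG.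
by rewrite (h G GK XG).
Qed.

Lemma facet_above (T : finType) (K : {set {set T}}) X : X \in K ->
  exists2 F, F \in facets K & X \subset F.
Proof.
move=> XK; have [F /andP[FK XF] eF] := top_att XK.
exists F => //; apply/facetP; split => // G GK FG.
apply/eqP; rewrite eq_sym eqEcard FG /= -eF; apply: top_ge => //.
exact: subset_trans XF FG.
Qed.

Lemma facet_in (T : finType) (K : {set {set T}}) X : X \in facets K -> X \in K.
Proof. by case/facetP. Qed.

Section HPart.
Set Implicit Arguments. Unset Strict Implicit. Unset Printing Implicit Defensive.
Import Order.TTheory GRing.Theory Num.Theory.

Lemma fT_zero (T : finType) (K : {set {set T}}) i k : i < k -> fT K i k = 0.
Proof.
move=> ik; rewrite fT_sum big1 // => X XK.
case: eqP => // hX; case: eqP => // ht; move: (top_self XK); rewrite hX ht.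
by rewrite leqNgt ik.
Qed.

Local Open Scope ring_scope.

Lemma pascal_sum (i m : nat) (g : nat -> nat) : (forall k, (i < k)%N -> g k = 0%N) ->
  \sum_(k < m.+2) (-1)^+(m.+1 - k) * ('C(i.+1 - k, m.+1 - k))%:Z * (g k)%:Z +
  \sum_(k < m.+1) (-1)^+(m - k) * ('C(i - k, m - k))%:Z * (g k)%:Z =
  \sum_(k < m.+2) (-1)^+(m.+1 - k) * ('C(i - k, m.+1 - k))%:Z * (g k)%:Z :> int.
Proof.
move=> hg; rewrite big_ord_recr [in RHS]big_ord_recr /= !subnn !bin0.
rewrite addrAC; congr (_ + _); rewrite -big_split /=; apply: eq_bigr => k _ /=.
have km : (k <= m)%N by rewrite -ltnS.
rewrite (subSn km) exprS.
case: (ltnP i k) => ik; first by rewrite hg // !mulr0 addr0.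
rewrite (subSn ik) binS PoszD; ring.
Qed.

Lemma Posz_sum (I : Type) (r : seq I) (F : I -> nat) :
  Posz (\sum_(y <- r) F y)%N = \sum_(y <- r) Posz (F y).
Proof. by elim: r => [|y r IH]; rewrite ?big_nil // !big_cons PoszD IH. Qed.

Lemma hT_step (T : finType) (C A : {set {set T}}) (I : eqType) (ys : seq I)
  (B : I -> {set {set T}}) :
 (forall i k, fT C i k = if i is i'.+1 then (fT A i' k +
     (if k is k'.+1 then fT A i' k' + \sum_(y <- ys) fT (B y) i' k' else 0))%N else 0%N) ->
 forall i j, hT_nat C i.+1 j = hT_nat A i j +
    (if j is j'.+1 then \sum_(y <- ys) hT_nat (B y) i j' else 0).
Proof.
move=> hf i j; rewrite /hT_nat.
rewrite (eq_bigr (fun k : 'I_j.+1 => (-1)^+(j - k) * ('C(i.+1 - k, j - k))%:Z * (fT A i k)%:Z +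
   (-1)^+(j - k) * ('C(i.+1 - k, j - k))%:Z *
   (if (k : nat) is k'.+1 then (fT A i k')%:Z + \sum_(y <- ys) (fT (B y) i k')%:Z else 0))); last first.
  move=> k _; rewrite hf PoszD mulrDr; congr (_ + _); case: (nat_of_ord k) => // k'.
  by rewrite PoszD Posz_sum.
rewrite big_split /= [in X in _ + X = _]big_ord_recl /= mulr0 add0r.
have hz : forall k, (i < k)%N -> fT A i k = 0%N by move=> k; apply: fT_zero.
case: j => [|m].
  by rewrite big_ord0 !addr0 !big_ord1 /= !subn0 !bin0.
rewrite (eq_bigr (fun k : 'I_m.+1 => (-1)^+(m - k) * ('C(i - k, m - k))%:Z * (fT A i k)%:Z +
   \sum_(y <- ys) (-1)^+(m - k) * ('C(i - k, m - k))%:Z * (fT (B y) i k)%:Z)); last first.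
  by move=> k _; rewrite /bump /= !add0n !add1n !subSS mulrDr mulr_sumr; congr (_ + _); apply: eq_bigr => y _; rewrite mulrA.
rewrite big_split /= addrA pascal_sum //; congr (_ + _).
by rewrite exchange_big.
Qed.

Lemma hT_negj (T : finType) (K : {set {set T}}) (i j : int) : j < 0 -> hT K i j = 0.
Proof. by case: i => [i|i]; case: j. Qed.

Lemma hT_int (T : finType) (C A : {set {set T}}) (I : eqType) (ys : seq I)
  (B : I -> {set {set T}}) :
 (forall i k, fT C i k = if i is i'.+1 then (fT A i' k +
     (if k is k'.+1 then fT A i' k' + \sum_(y <- ys) fT (B y) i' k' else 0))%N else 0%N) ->
 forall i j : int, hT C i j = hT A (i - 1) j + \sum_(y <- ys) hT (B y) (i - 1) (j - 1).
Proof.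
move=> hf i j.
case: (ltrP j 0) => hj.
  rewrite !hT_negj ?add0r ?big1_seq // => y _; rewrite hT_negj //.
  by apply: lt_trans hj; rewrite gtrDl.
case: j hj => [m _|m //].
case: i => [[|n]|n].
- rewrite /= /hT_nat big1 ?add0r; last by move=> k _; rewrite hf mulr0.
  by rewrite big1_seq.
- have -> : (Posz n.+1 - 1 = Posz n) by rewrite -addn1 PoszD addrK.
  rewrite /= (hT_step hf); congr (_ + _).
  case: m => [|m]; first by rewrite big1_seq.
  have -> : (Posz m.+1 - 1 = Posz m) by rewrite -addn1 PoszD addrK.
  by [].
- by rewrite [hT C _ _]/= big1_seq.
Qed.

End HPart.
Set Implicit Arguments. Unset Strict Implicit. Unset Printing Implicit Defensive.

Section Dec.
Variables (T : finType) (I : eqType).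
Variables (A : {set {set T}}) (e : T) (ys : seq I) (ep : I -> T) (B : I -> {set {set T}}).
Hypothesis hA : forall a, a \in A -> e \notin a.
Hypothesis hB : forall y, y \in ys -> forall a, a \in A -> ep y \notin a.
Hypothesis hBA : forall y, y \in ys -> B y \subset A.
Hypothesis hBe : forall y, y \in ys -> ep y != e.
Hypothesis hinj : {in ys &, injective ep}.
Hypothesis huniq : uniq ys.

Definition Cdec := A :|: cone e A :|: \bigcup_(y <- ys) cone (ep y) (B y).
Local Notation C := Cdec.

Lemma memC X : (X \in C) =
  [|| X \in A, X \in cone e A | has (fun y => X \in cone (ep y) (B y)) ys].
Proof. by rewrite /Cdec !in_setU mem_bigcup_seq orbA. Qed.

Lemma BinA y b : y \in ys -> b \in B y -> b \in A.
Proof. by move=> yy bB; apply: (subsetP (hBA yy)). Qed.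

Lemma AinC a : a \in A -> a \in C.
Proof. by move=> aA; rewrite memC aA. Qed.
Lemma coneinC a : a \in A -> a :|: [set e] \in C.
Proof. by move=> aA; rewrite memC; apply/orP; right; apply/orP; left; apply/imsetP; exists a. Qed.
Lemma BinC y b : y \in ys -> b \in B y -> b :|: [set ep y] \in C.
Proof. by move=> yy bB; rewrite memC; apply/orP; right; apply/orP; right; apply/hasP; exists y => //; apply/imsetP; exists b. Qed.

Lemma Ccase X : X \in C ->
  [\/ X \in A, (exists2 a, a \in A & X = a :|: [set e]) |
      exists y, y \in ys /\ (exists2 b, b \in B y & X = b :|: [set ep y])].
Proof.
rewrite memC => /or3P[h|/imsetP[a aA ->]|/hasP[y yy /imsetP[b bB ->]]].
- by constructor 1.
- by constructor 2; exists a.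
- by constructor 3; exists y; split => //; exists b.
Qed.

Lemma top_CA a : a \in A -> top_size C a = (top_size A a).+1.
Proof.
move=> aA; apply/eqP; rewrite eqn_leq; apply/andP; split.
  apply: top_le => F /Ccase[FA|[a' a'A ->]|[y [yy [b bB ->]]]] sF.
  - by apply: leq_trans (top_ge FA sF) _.
  - by rewrite card_U1 ?hA // ltnS; apply: top_ge => //; apply: sub_U1 sF (hA aA).
  - rewrite card_U1 ?(hB yy) ?(BinA yy) // ltnS; apply: top_ge; first exact: (BinA yy).
    by apply: sub_U1 sF (hB yy aA).
have [F /andP[FA sF] ->] := top_att aA.
by rewrite -(card_U1 (hA FA)); apply: top_ge; [apply: coneinC | apply: subset_trans sF (subsetUl _ _)].
Qed.

Lemma top_Ccone a : a \in A -> top_size C (a :|: [set e]) = (top_size A a).+1.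
Proof.
move=> aA; apply/eqP; rewrite eqn_leq; apply/andP; split.
  apply: top_le => F /Ccase[FA|[a' a'A ->]|[y [yy [b bB ->]]]] sF.
  - by move: (hA FA); rewrite (subsetP sF) // in_setU set11 orbT.
  - rewrite card_U1 ?hA // ltnS; apply: top_ge => //; apply: sub_U1 (hA aA).
    exact: subset_trans (subsetUl _ _) sF.
  - have := subsetP sF e; rewrite !in_setU !in_set1 eqxx orbT => /(_ isT).
    by rewrite eq_sym (negbTE (hBe yy)) orbF (negbTE (hA (BinA yy bB))).
have [F /andP[FA sF] ->] := top_att aA.
rewrite -(card_U1 (hA FA)); apply: top_ge; first by apply: coneinC.
by apply: setSU.
Qed.

Lemma top_CB y b : y \in ys -> b \in B y -> top_size C (b :|: [set ep y]) = (top_size (B y) b).+1.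
Proof.
move=> yy bB; have bA := BinA yy bB.
apply/eqP; rewrite eqn_leq; apply/andP; split.
  apply: top_le => F /Ccase[FA|[a' a'A ->]|[y' [yy' [b' bB' ->]]]] sF.
  - by move: (hB yy FA); rewrite (subsetP sF) // in_setU set11 orbT.
  - have := subsetP sF (ep y); rewrite !in_setU !in_set1 eqxx orbT => /(_ isT).
    by rewrite (negbTE (hBe yy)) orbF (negbTE (hB yy a'A)).
  - have b'A := BinA yy' bB'.
    have := subsetP sF (ep y); rewrite !in_setU !in_set1 eqxx orbT => /(_ isT).
    rewrite (negbTE (hB yy b'A)) /= => /eqP /(hinj yy yy') eyy; subst y'.
    rewrite card_U1 ?(hB yy) // ltnS; apply: top_ge => //; apply: sub_U1 (hB yy bA).
    exact: subset_trans (subsetUl _ _) sF.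
have [F /andP[FB sF] ->] := top_att bB.
rewrite -(card_U1 (hB yy (BinA yy FB))); apply: top_ge; first by apply: BinC.
by apply: setSU.
Qed.


Lemma sumC (g : {set T} -> nat) : \sum_(X in C) g X =
  \sum_(X in A) g X + \sum_(a in A) g (a :|: [set e]) +
  \sum_(y <- ys) \sum_(b in B y) g (b :|: [set ep y]).
Proof.
rewrite /Cdec sumU; last first.
  apply/mydisj => X; rewrite in_setU mem_bigcup_seq => /orP[XA|/imsetP[a aA ->]] /hasP[y yy /imsetP[b bB eX]].
    by move: (hB yy XA); rewrite eX in_setU set11 orbT.
  have := hB yy aA; have := hBe yy; have : ep y \in a :|: [set e] by rewrite eX in_setU set11 orbT.
  by rewrite in_setU in_set1 => /orP[->|->].
rewrite sumU; last first.
  apply/mydisj => X XA /imsetP[a aA eX].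
  by move: (hA XA); rewrite eX in_setU set11 orbT.
rewrite sum_bigcup //; last first.
  move=> y y' yy yy' ne; apply/mydisj => X /imsetP[b bB ->] /imsetP[b' bB' eX].
  have : ep y \in b' :|: [set ep y'] by rewrite -eX in_setU set11 orbT.
  rewrite in_setU (negbTE (hB yy (BinA yy' bB'))) /= in_set1 => /eqP /(hinj yy yy') eyy.
  by move: ne; rewrite eyy eqxx.
rewrite big_imset; last by move=> a a' aA a'A; apply: U1_inj; apply: hA.
congr (_ + _); apply: eq_big_seq => y yy; rewrite big_imset //.
by move=> b b' bB b'B; apply: U1_inj; apply: (hB yy); apply: (BinA yy).
Qed.

Lemma fT_C i k : fT C i k = if i is i'.+1 then fT A i' k +
   (if k is k'.+1 then fT A i' k' + \sum_(y <- ys) fT (B y) i' k' else 0) else 0.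
Proof.
rewrite fT_sum sumC.
rewrite (eq_bigr (fun X : {set T} => (#|X| == k) && ((top_size A X).+1 == i) : nat)); last first.
  by move=> X XA; rewrite top_CA.
rewrite [in X in _ + X + _](eq_bigr (fun a : {set T} => (#|a|.+1 == k) && ((top_size A a).+1 == i) : nat)); last first.
  by move=> a aA; rewrite top_Ccone // card_U1 ?hA.
rewrite (eq_big_seq (fun y : I => \sum_(b in B y) ((#|b|.+1 == k) && ((top_size (B y) b).+1 == i) : nat))); last first.
  move=> y yy; apply: eq_bigr => b bB; rewrite top_CB // card_U1 //.
  by apply: (hB yy); apply: (BinA yy).
case: i => [|i].
  rewrite !big1 ?big1_seq // => *; try by rewrite andbF.
  by rewrite big1 // => *; rewrite andbF.
rewrite -addnA fT_sum; congr (_ + _).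
case: k => [|k].
  by rewrite big1 // add0n big1_seq // => y _; apply: big1.
rewrite fT_sum; congr (_ + _).
apply: eq_big_seq => y yy.
by rewrite fT_sum.
Qed.


Lemma facetsC F : F \in facets C <->
  (exists2 a, a \in facets A & F = a :|: [set e]) \/
  (exists y, y \in ys /\ exists2 b, b \in facets (B y) & F = b :|: [set ep y]).
Proof.
split.
  case/facetP => FC hF; case/Ccase: (FC) => [FA|[a aA eF]|[y [yy [b bB eF]]]].
  - have h := hF _ (coneinC FA) (subsetUl _ _).
    by move: (hA FA); rewrite -h in_setU set11 orbT.
  - left; exists a => //; apply/facetP; split => // G GA aG.
    have := hF _ (coneinC GA); rewrite eF => /(_ (setSU _ aG)).
    by apply: U1_inj; apply: hA.
  - right; exists y; split => //; exists b => //; apply/facetP; split => // G GB bG.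
    have := hF _ (BinC yy GB); rewrite eF => /(_ (setSU _ bG)).
    by apply: U1_inj; apply: (hB yy); apply: (BinA yy).
case=> [[a /facetP[aA ha] ->]|[y [yy [b /facetP[bB hb] ->]]]]; apply/facetP.
  split; first exact: coneinC.
  move=> G /Ccase[GA|[a' a'A ->]|[y [yy [b bB ->]]]] sG.
  - by move: (hA GA); rewrite (subsetP sG) // in_setU set11 orbT.
  - by rewrite (ha a' a'A) // (sub_U1 _ (hA aA)) // (subset_trans (subsetUl _ _) sG).
  - have := subsetP sG e; rewrite !in_setU !in_set1 eqxx orbT => /(_ isT).
    by rewrite eq_sym (negbTE (hBe yy)) orbF (negbTE (hA (BinA yy bB))).
split; first exact: BinC.
have bA := BinA yy bB.
move=> G /Ccase[GA|[a' a'A ->]|[y' [yy' [b' bB' ->]]]] sG.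
- by move: (hB yy GA); rewrite (subsetP sG) // in_setU set11 orbT.
- have := subsetP sG (ep y); rewrite !in_setU !in_set1 eqxx orbT => /(_ isT).
  by rewrite (negbTE (hBe yy)) orbF (negbTE (hB yy a'A)).
- have := subsetP sG (ep y); rewrite !in_setU !in_set1 eqxx orbT => /(_ isT).
  rewrite (negbTE (hB yy (BinA yy' bB'))) /= => /eqP /(hinj yy yy') eyy; subst y'.
  by rewrite (hb b' bB') // (sub_U1 _ (hB yy bA)) // (subset_trans (subsetUl _ _) sG).
Qed.

Variables (sA : seq {set T}) (sB : I -> seq {set T}).
Hypothesis shA : shelling_order A sA.
Hypothesis shB : forall y, y \in ys -> shelling_order (B y) (sB y).

Definition sC := [seq a :|: [set e] | a <- sA] ++
   flatten [seq [seq b :|: [set ep y] | b <- sB y] | y <- ys].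

Lemma memsA a : (a \in sA) = (a \in facets A).
Proof. by case: shA. Qed.
Lemma memsB y b : y \in ys -> (b \in sB y) = (b \in facets (B y)).
Proof. by move=> yy; case: (shB yy). Qed.

Lemma mem_sC F : F \in sC <->
  (exists2 a, a \in facets A & F = a :|: [set e]) \/
  (exists y, y \in ys /\ exists2 b, b \in facets (B y) & F = b :|: [set ep y]).
Proof.
rewrite /sC mem_cat; split.
  case/orP => [/mapP[a aA ->]|/flattenP[t /mapP[y yy ->] /mapP[b bB ->]]].
    by left; exists a; rewrite -?memsA.
  by right; exists y; split => //; exists b; rewrite -?(memsB _ yy).
case=> [[a aA ->]|[y [yy [b bB ->]]]]; apply/orP.
  by left; apply: map_f; rewrite memsA.
right; apply/flattenP; exists [seq b0 :|: [set ep y] | b0 <- sB y]; first by apply: map_f.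
by apply: map_f; rewrite memsB.
Qed.

Lemma uniq_flat (zs : seq I) : uniq zs -> {subset zs <= ys} ->
  uniq (flatten [seq [seq b :|: [set ep y] | b <- sB y] | y <- zs]).
Proof.
elim: zs => [|z zs IH] //= /andP[zn uz] sub.
have zy : z \in ys by apply: sub; rewrite inE eqxx.
rewrite cat_uniq IH ?andbT; last by move=> y yy; apply: sub; rewrite inE yy orbT.
apply/andP; split.
  rewrite map_inj_in_uniq; first by case: (shB zy).
  move=> b b' bB b'B; apply: U1_inj; apply: (hB zy); apply: (BinA zy);
   by apply: facet_in; rewrite -(memsB _ zy).
apply/hasP => [[F /flattenP[t /mapP[y yz ->] /mapP[b' bB' ->]] /mapP[b bB eF]]].
have yy : y \in ys by apply: sub; rewrite inE yz orbT.
have b'A : b' \in A by apply: (BinA yy); apply: facet_in; rewrite -(memsB _ yy).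
have : ep z \in b' :|: [set ep y] by rewrite eF in_setU set11 orbT.
rewrite in_setU (negbTE (hB zy b'A)) /= in_set1 => /eqP /(hinj zy yy) ezy.
by move: zn; rewrite ezy yz.
by [].
Qed.

Lemma sB_A y b : y \in ys -> b \in sB y -> b \in A.
Proof. by move=> yy bB; apply: (BinA yy); apply: facet_in; rewrite -(memsB _ yy). Qed.

Lemma sgood_flat (zs : seq I) (prev : seq {set T}) : uniq zs -> {subset zs <= ys} ->
 (forall y G, y \in zs -> G \in prev -> ep y \notin G) ->
 (forall y b, y \in zs -> b \in sB y -> exists2 H : {set T}, H \in prev & H :&: (b :|: [set ep y]) = b) ->
 sgood prev (flatten [seq [seq b :|: [set ep y] | b <- sB y] | y <- zs]).
Proof.
elim: zs prev => [|z zs IH] prev /=; first by move=> _ _ _ _ n.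
case/andP=> zn uz sub h5 h6.
have zy : z \in ys by apply: sub; rewrite inE eqxx.
apply: sgood_cat.
  apply: sgood_map.
  - exact: (good_of_shell (shB zy)).
  - by move=> b bB; apply: (hB zy); apply: (sB_A zy).
  - by move=> G; apply: h5; rewrite inE eqxx.
  - by move=> b G bB _; apply: h6 => //; rewrite inE eqxx.
apply: IH => //.
- by move=> y yy; apply: sub; rewrite inE yy orbT.
- move=> y G yz; rewrite mem_cat => /orP[Gp|/mapP[b bB ->]].
    by apply: h5 => //; rewrite inE yz orbT.
  have yy : y \in ys by apply: sub; rewrite inE yz orbT.
  rewrite in_setU in_set1 (negbTE (hB yy (sB_A zy bB))) /=.
  apply/eqP => /(hinj yy zy) eyz; by move: zn; rewrite -eyz yz.
- move=> y b yz bB; have yz2 : y \in z :: zs by rewrite inE yz orbT.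
  have [H Hp eH] := h6 y b yz2 bB.
  by exists H; rewrite // mem_cat Hp.
Qed.

Lemma shellC : shelling_order C sC.
Proof.
apply: shell_of_good.
- rewrite /sC cat_uniq uniq_flat // andbT; apply/andP; split.
    rewrite map_inj_in_uniq; first by case: shA.
    move=> a a' aA a'A; apply: U1_inj; apply: hA; apply: facet_in; rewrite -memsA //.
  apply/hasP => [[F /flattenP[t /mapP[y yy ->] /mapP[b bB ->]] /mapP[a aA eF]]].
  have bA : b \in A by apply: (BinA yy); apply: facet_in; rewrite -(memsB _ yy).
  have : e \in b :|: [set ep y] by rewrite eF in_setU set11 orbT.
  by rewrite in_setU (negbTE (hA bA)) in_set1 eq_sym (negbTE (hBe yy)).
- move=> F; apply/idP/idP => h.
    by apply/facetsC; apply/mem_sC.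
  by apply/mem_sC; apply/facetsC.
apply: sgood_cat.
  apply: sgood_map => //; first by case: shA => _ _; move/good_of_shell: shA.
  by move=> a aA; apply: hA; apply: facet_in; rewrite -memsA.
have : forall y, y \in ys -> forall b, b \in sB y ->
   exists2 H, H \in [::] ++ [seq a :|: [set e] | a <- sA] & H :&: (b :|: [set ep y]) = b.
  move=> y yy b bB; have bA : b \in A by apply: (BinA yy); apply: facet_in; rewrite -(memsB _ yy).
  have [a aF ba] := facet_above bA; exists (a :|: [set e]); first by rewrite /=; apply: map_f; rewrite memsA.
  have aA := facet_in aF.
  apply/setP => z; rewrite !inE; case: (z =P ep y) => [->|_].
    by rewrite (negbTE (hB yy aA)) (negbTE (hBe yy)) (negbTE (hB yy bA)).
  rewrite orbF; case: (z =P e) => [->|_]; first by rewrite (negbTE (hA bA)) andbF.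
  by rewrite orbF; apply/andP/idP => [[]//|zb]; rewrite (subsetP ba).
have : forall y G, y \in ys -> G \in [::] ++ [seq a :|: [set e] | a <- sA] -> ep y \notin G.
  move=> y G yy /mapP[a aA ->]; have aF : a \in A by apply: facet_in; rewrite -memsA.
  by rewrite in_setU in_set1 negb_or (hB yy aF) hBe.
move=> h5 h6; apply: sgood_flat => // y b yy bB; exact: h6.
Qed.

Lemma gen_main C : C = Cdec -> shelling_order C sC /\
  forall i j : int, hT C i j = (hT A (i - 1) j + \sum_(y <- ys) hT (B y) (i - 1) (j - 1))%R.
Proof.
move=> ->; split; first exact: shellC.
by apply: hT_int => i k; apply: fT_C.
Qed.

End Dec.

Set Implicit Arguments. Unset Strict Implicit. Unset Printing Implicit Defensive.

Lemma connect_closed (U : finType) (r : rel U) (P : U -> Prop) u w :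
  P u -> (forall a b, P a -> r a b -> P b) -> connect r u w -> P w.
Proof.
move=> Pu st /connectP[p pp ->]; elim: p u pp Pu => [|b p IH] u //= /andP[rub pp] Pu.
by apply: IH pp _; apply: st rub.
Qed.

Section G.
Variable V : finType.
Implicit Types (A c E X : {set V * V}) (a b s t u w z : V).
Definition R A := [rel a b : V | (a, b) \in A].

Lemma dforest_sub A c : c \subset A -> dforest A -> dforest c.
Proof.
move=> cA /andP[/forallP hi /forall_inP ha]; apply/andP; split.
  apply/forallP => w; apply: leq_trans (hi w); apply: subset_leq_card.
  by apply/subsetP => e; rewrite !inE => /andP[/(subsetP cA) -> ->].
apply/forall_inP => e ec; apply/negP => /(connect_sub _) h.
have /negP := ha e (subsetP cA e ec); apply; apply: h.
by move=> a b /= ab; apply: connect1; apply: (subsetP cA).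
Qed.

Lemma indeg A e1 e2 : dforest A -> e1 \in A -> e2 \in A -> e1.2 = e2.2 -> e1 = e2.
Proof.
case/andP=> /forallP /(_ e2.2) /card_le1_eqP h _ e1A e2A e12; apply: h; rewrite inE.
  by rewrite e2A eqxx.
by rewrite e1A e12 eqxx.
Qed.

Lemma acyc A e : dforest A -> e \in A -> ~~ connect (R A) e.2 e.1.
Proof. by case/andP=> _ /forall_inP; apply. Qed.

Lemma key_conn c s t u w : connect (R (c :|: [set (s, t)])) u w ->
  connect (R c) u w \/ (connect (R c) u s /\ connect (R c) t w).
Proof.
move=> hc; apply: (@connect_closed _ _ (fun w => connect (R c) u w \/ (connect (R c) u s /\ connect (R c) t w)) u w _ _ hc); first by left.
move=> a b h; rewrite /= in_setU in_set1 => /orP[ab|/eqP[ea eb]]; last first.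
  by subst a b; right; split; [case: h => [|[]] | ].
case: h => [h|[h1 h2]]; first by left; apply: connect_trans h (connect1 _).
by right; split => //; apply: connect_trans h2 (connect1 _).
Qed.

Lemma add_edge c s t : dforest c -> (forall e, e \in c -> e.2 != t) ->
  ~~ connect (R c) t s -> dforest (c :|: [set (s, t)]).
Proof.
move=> fc hc nts; apply/andP; split.
  apply/forallP => w; apply/card_le1_eqP => e1 e2; rewrite !inE.
  case/andP=> /orP[e1c|/eqP->] /eqP h1; case/andP=> /orP[e2c|/eqP->] /eqP h2.
  - by apply: (indeg fc) => //; rewrite h1 h2.
  - by move: (hc _ e1c); rewrite h1 -h2 eqxx.
  - by move: (hc _ e2c); rewrite h2 -h1 eqxx.
  - by [].
apply/forall_inP => e; rewrite in_setU in_set1 => /orP[ec|/eqP->]; apply/negP.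
  case/key_conn => [|[h1 h2]]; first by apply/negP; apply: acyc.
  have ec2 : R c e.1 e.2 by rewrite /= -surjective_pairing.
  by move/negP: nts; apply; apply: connect_trans h2 (connect_trans (connect1 ec2) h1).
by case/key_conn => [|[]] /=; move/negP: nts.
Qed.

Lemma two_cycle X a b : (a, b) \in X -> (b, a) \in X -> ~~ dforest X.
Proof.
move=> ab ba; apply/negP => fX; have := acyc fX ab; rewrite /=.
by rewrite (connect1 (e := R X) ba).
Qed.

Lemma no_out c z w : (forall e, e \in c -> e.1 != z) -> connect (R c) z w -> w = z.
Proof.
move=> h hc; apply: (@connect_closed _ _ (fun w => w = z) z w _ _ hc) => // a b -> /= zb.
by move: (h _ zb); rewrite eqxx.
Qed.

Lemma no_in c z u : (forall e, e \in c -> e.2 != z) -> connect (R c) u z -> u = z.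
Proof.
move=> h cuz; apply/eqP; apply/negPn/negP => uz.
have : z != z.
  by apply: (@connect_closed _ _ (fun w => w != z) u z uz _ cuz) => a b _ /= ab; apply: (h _ ab).
by rewrite eqxx.
Qed.

End G.

Set Implicit Arguments. Unset Strict Implicit. Unset Printing Implicit Defensive.

Section Count.
Variables (V : finType) (W : {set V}) (E2 : {set V * V}) (r : V).
Hypothesis rW : r \in W.
Hypothesis conn : forall w, w \in W -> connect (uadj E2) w r.

Definition Pn w n := [exists t : n.-tuple V, path (uadj E2) w t && (last w t == r)].

Lemma PnP w n : reflect (exists p : seq V, [/\ size p = n, path (uadj E2) w p & last w p = r]) (Pn w n).
Proof.
apply: (iffP existsP) => [[t /andP[pt /eqP lt]]|[p [sp pp lp]]].
  by exists (val t); rewrite size_tuple.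
have sp' : size p == n by rewrite sp.
by exists (Tuple sp'); rewrite /= pp lp eqxx.
Qed.

Lemma exPn w : exists n, Pn w n || ~~ connect (uadj E2) w r.
Proof.
case: (boolP (connect (uadj E2) w r)) => [/connectP[p pp lp]|_]; last by exists 0; rewrite orbT.
by exists (size p); apply/orP; left; apply/PnP; exists p.
Qed.

Definition d w := ex_minn (exPn w).

Lemma dP w : w \in W -> Pn w (d w).
Proof. by move=> wW; rewrite /d; case: ex_minnP => m /orP[//|]; rewrite conn. Qed.

Lemma dmin w n : Pn w n -> d w <= n.
Proof. by move=> h; rewrite /d; case: ex_minnP => m _; apply; rewrite h. Qed.

Lemma dstep w : w \in W -> w != r -> exists u, uadj E2 w u && (d u < d w).
Proof.
move=> wW wr; have /PnP[p [sp pp lp]] := dP wW.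
case: p sp pp lp => [|u p] sp /= pp lp; first by move: wr; rewrite lp eqxx.
case/andP: pp => wu pp; exists u; rewrite wu /= -sp ltnS; apply: dmin.
by apply/PnP; exists p.
Qed.

Definition nx w := odflt w [pick u | uadj E2 w u && (d u < d w)].

Lemma nxP w : w \in W -> w != r -> uadj E2 w (nx w) && (d (nx w) < d w).
Proof.
move=> wW wr; rewrite /nx; case: pickP => [u -> //|h].
by have [u] := dstep wW wr; rewrite h.
Qed.

Lemma conn_count : #|W| <= #|uedges E2|.+1.
Proof.
rewrite (cardsD1 r W) rW add1n ltnS.
have -> : #|W :\ r| = #|[set [set w; nx w] | w in W :\ r]|.
  rewrite card_in_imset // => w w'; rewrite !inE => /andP[wr wW] /andP[w'r w'W] e.
  have /andP[_ dw] := nxP wW wr; have /andP[_ dw'] := nxP w'W w'r.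
  have : w \in [set w'; nx w'] by rewrite -e !inE eqxx.
  have : w' \in [set w; nx w] by rewrite e !inE eqxx.
  rewrite !inE => /orP[/eqP->//|/eqP e1] /orP[/eqP->//|/eqP e2].
  by move: dw dw'; rewrite -e1 -e2 => h1 h2; have := ltn_trans h1 h2; rewrite ltnn.
apply: subset_leq_card; apply/subsetP => S /imsetP[w]; rewrite !inE => /andP[wr wW] ->.
have /andP[h _] := nxP wW wr; apply/imsetP; case/orP: h => h.
  by exists (w, nx w).
by exists (nx w, w) => //; rewrite setUC.
Qed.

End Count.

Lemma set2_eq (V : finType) (a b x y : V) : x != y -> [set a; b] = [set x; y] ->
  (a = x /\ b = y) \/ (a = y /\ b = x).
Proof.
move=> xy e.
have : a \in [set x; y] by rewrite -e !inE eqxx.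
have : b \in [set x; y] by rewrite -e !inE eqxx orbT.
have : x \in [set a; b] by rewrite e !inE eqxx.
have : y \in [set a; b] by rewrite e !inE eqxx orbT.
rewrite !inE.
by do 4 case/orP=> /eqP ?; subst => //; try (by left); try (by right); move: xy; rewrite eqxx.
Qed.

Lemma tree_cut (V : finType) (W : {set V}) (E c : {set V * V}) (x y : V) :
  ess_tree W E -> (y, x) \in E -> x != y -> c \subset E :\ (x, y) :\ (y, x) ->
  ~~ connect (R c) x y.
Proof.
case=> W0 connW cardE yxE xy cE; apply/negP => cxy.
set E2 := E :\ (x, y) :\ (y, x).
have sym2 : symmetric (uadj E2) by move=> a b; rewrite /uadj /= orbC.
have cxy2 : connect (uadj E2) x y.
  by apply: (connect_sub _ cxy) => a b /= ab; apply: connect1; apply/orP; left; apply: (subsetP cE _ ab).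
have cyx2 : connect (uadj E2) y x by rewrite (sym_connect_sym sym2).
have conn2 : forall a b, a \in W -> b \in W -> connect (uadj E2) a b.
  move=> a b aW bW; apply: (connect_sub _ (connW _ _ aW bW)) => u w /= /orP h.
  have [/eqP[-> ->]|n1] := boolP ((u, w) == (x, y)); first exact: cxy2.
  have [/eqP[-> ->]|n2] := boolP ((u, w) == (y, x)); first exact: cyx2.
  apply: connect1; rewrite /uadj /E2 /= !inE.
  case: h => h; [apply/orP; left | apply/orP; right]; rewrite h andbT.
    by rewrite n1 n2.
  apply/andP; split.
    by apply: contra n1 => /eqP[-> ->].
  by apply: contra n2 => /eqP[-> ->].
have [r rW] := set0Pn _ W0.
have c1 := conn_count rW (fun w wW => conn2 w r wW rW).
have c2 : #|uedges E2| < #|uedges E|.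
  apply: (@leq_ltn_trans #|uedges E :\ [set y; x]|); last first.
    by rewrite (cardsD1 [set y; x] (uedges E)) (imset_f _ yxE).
  apply: subset_leq_card; apply/subsetP => S /imsetP[[a b] ab ->] /=.
  rewrite !inE in ab; case/andP: ab => ab1 /andP[ab2 abE].
  rewrite !inE (imset_f _ abE) andbT; apply/negP => /eqP /set2_eq.
  rewrite eq_sym => /(_ xy) [[ea eb]|[ea eb]]; subst.
    by rewrite eqxx in ab1.
  by rewrite eqxx in ab2.
have : 0 < #|W| by rewrite card_gt0.
lia.
Qed.

Set Implicit Arguments. Unset Strict Implicit. Unset Printing Implicit Defensive.
Import GRing.Theory Num.Theory.

Lemma Cdec_eqP (T : finType) (I : eqType) (C A : {set {set T}}) (e : T) (ys : seq I)
  (ep : I -> T) (B : I -> {set {set T}}) :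
  (forall X, X \in C -> X \in A \/ (e \in X /\ X :\ e \in A) \/
       exists y, [/\ y \in ys, ep y \in X & X :\ ep y \in B y]) ->
  (forall a, a \in A -> a \in C) ->
  (forall a, a \in A -> a :|: [set e] \in C) ->
  (forall y b, y \in ys -> b \in B y -> b :|: [set ep y] \in C) ->
  C = Cdec A e ys ep B.
Proof.
move=> h1 h2 h3 h4; apply/setP => X; rewrite memC; apply/idP/idP.
  case/h1 => [->//|[[eX XA]|[y [yy eX XB]]]]; apply/orP; right; apply/orP.
    by left; apply/imsetP; exists (X :\ e) => //; rewrite setUC setD1K.
  by right; apply/hasP; exists y => //; apply/imsetP; exists (X :\ ep y) => //; rewrite setUC setD1K.
case/or3P => [/h2 //|/imsetP[a aA ->]|/hasP[y yy /imsetP[b bB ->]]]; first exact: h3.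
exact: h4.
Qed.

Lemma inDelta (V : finType) (F X : {set V * V}) : X \subset F -> dforest X -> X \in Delta F.
Proof. by move=> h1 h2; rewrite inE h1. Qed.

Lemma DeltaP (V : finType) (F X : {set V * V}) : X \in Delta F -> X \subset F /\ dforest X.
Proof. by rewrite inE => /andP. Qed.

Lemma Delta_mono (V : finType) (F1 F2 : {set V * V}) : F1 \subset F2 -> Delta F1 \subset Delta F2.
Proof.
move=> h; apply/subsetP => X /DeltaP[s f]; apply: inDelta => //; exact: subset_trans s h.
Qed.

Set Implicit Arguments. Unset Strict Implicit. Unset Printing Implicit Defensive.
Import GRing.Theory Num.Theory.

Theorem mainTheorem9 (V : finType) (W : {set V}) (E : {set V * V})
  (v x : V) (ys : seq V) (s : nat)
  (Fs Hs : seq {set V * V}) (G : V -> seq {set V * V}) :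
  digraph W E -> ess_tree W E -> 2 <= #|W| ->
  v \in W ->
  (forall e, e \in E -> (e.1 == v) || (e.2 == v) ->
     (e == (v, x)) || (e == (x, v))) ->
  ((v, x) \in E) || ((x, v) \in E) ->
  (* y_1..y_k : vertices y with (y,x) an edge of D' = D \ v *)
  uniq ys ->
  (forall y, (y \in ys) = ((y, x) \in del_vertex E v)) ->
  s <= size ys ->
  (forall i, i < size ys -> ((x, nth x ys i) \in E) = (i < s)) ->
  let E' := del_vertex E v in
  let E0 := E' :\: [set (y, x) | y in ys] in
  shelling_order (Delta E') Fs ->
  shelling_order (Delta E0) Hs ->
  (forall y, y \in ys -> shelling_order (Delta (E0 :\ (x, y))) (G y)) ->
  [/\
   (* (a) *)
   ((x, v) \in E -> (v, x) \notin E ->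
      shelling_order (Delta E) [seq F :|: [set (x, v)] | F <- Fs] /\
      forall i j : int, hT (Delta E) i j = hT (Delta E') (i - 1)%R j),
   (* (b) *)
   ((x, v) \notin E -> (v, x) \in E ->
      shelling_order (Delta E)
        ([seq H :|: [set (v, x)] | H <- Hs] ++
         flatten [seq [seq Gp :|: [set (y, x)] | Gp <- G y] | y <- ys]) /\
      forall i j : int, hT (Delta E) i j =
        (hT (Delta E0) (i - 1) j +
         \sum_(y <- ys) hT (Delta (E0 :\ (x, y))) (i - 1) (j - 1))%R) &
   (* (c) *)
   ((x, v) \in E -> (v, x) \in E ->
      shelling_order (Delta E)
        ([seq F :|: [set (x, v)] | F <- Fs] ++ [seq H :|: [set (v, x)] | H <- Hs]) /\
      forall i j : int, hT (Delta E) i j =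
        (hT (Delta E') (i - 1) j + hT (Delta E0) (i - 1) (j - 1))%R)].
Proof.
move=> [subW noloop] tree _ _ leaf vxor uys hys _ _ E' E0 shF shH shG.
have xv : x != v.
  by apply/eqP => exv; move: vxor; rewrite exv (negbTE (noloop v)).
have E'P e : (e \in E') = [&& e \in E, e.1 != v & e.2 != v] by rewrite /E' /del_vertex inE.
have E'E : E' \subset E by apply/subsetP => e; rewrite E'P => /andP[].
have Ecase e : e \in E -> [\/ e \in E', e = (v, x) | e = (x, v)].
  move=> eE; case: (boolP ((e.1 == v) || (e.2 == v))) => h.
    by case/orP: (leaf e eE h) => /eqP ->; [constructor 2 | constructor 3].
  by constructor 1; rewrite E'P eE; move: h; rewrite negb_or.
have E0P e : (e \in E0) = (e \in E') && (e \notin [set (y, x) | y in ys]) by rewrite /E0 inE andbC.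
have E0E' : E0 \subset E' by apply/subsetP => e; rewrite E0P => /andP[].
have E0nx e : e \in E0 -> e.2 != x.
  rewrite E0P => /andP[eE' ni]; apply/eqP => ex; move: ni; apply/negP/negPn.
  apply/imsetP; exists e.1; last by rewrite -ex -surjective_pairing.
  by rewrite hys -ex -surjective_pairing.
have E'x e : e \in E' -> e.2 = x -> e \in E0 = false.
  by move=> _ ex; apply/negbTE/negP => /E0nx; rewrite ex eqxx.
have E'1 e : e \in E' -> e.1 != v by rewrite E'P => /and3P[].
have E'2 e : e \in E' -> e.2 != v by rewrite E'P => /and3P[].
have notE' a : a \in Delta E' -> forall e, e \in a -> e \in E'.
  by move=> /DeltaP[sa _] e ea; apply: (subsetP sa).
have notE0 a : a \in Delta E0 -> forall e, e \in a -> e \in E0.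
  by move=> /DeltaP[sa _] e ea; apply: (subsetP sa).
have coneA a : a \in Delta E' -> (x, v) \in E -> a :|: [set (x, v)] \in Delta E.
  move=> aD xvE; have [sa fa] := DeltaP aD; apply: inDelta.
    apply/subsetP => e; rewrite in_setU in_set1 => /orP[/(subsetP sa)/(subsetP E'E)|/eqP->] //.
  apply: add_edge fa _ _; first by move=> e /(notE' _ aD); apply: E'2.
  apply/negP => /(no_out (fun e ea => E'1 e (notE' _ aD e ea))) exv.
  by rewrite exv eqxx in xv.
have coneB b : b \in Delta E0 -> (v, x) \in E -> b :|: [set (v, x)] \in Delta E.
  move=> bD vxE2; have [sb fb] := DeltaP bD; apply: inDelta.
    apply/subsetP => e; rewrite in_setU in_set1.
    by case/orP=> [/(subsetP sb)/(subsetP E0E')/(subsetP E'E)|/eqP->].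
  apply: add_edge fb _ _; first by move=> e /(notE0 _ bD); apply: E0nx.
  apply/negP => /(no_in (fun e eb => E'2 e (subsetP E0E' e (notE0 _ bD e eb)))) exv.
  by rewrite exv eqxx in xv.
have vxcase X : X \in Delta E -> (v, x) \in X -> (x, v) \notin X -> X :\ (v, x) \in Delta E0.
  move=> /DeltaP[sX fX] vxX xvX; apply: inDelta; last by apply: dforest_sub fX; apply: subD1set.
  apply/subsetP => e; rewrite in_setD1 => /andP[ne eX].
  case/Ecase: (subsetP sX _ eX) => [eE'|ee|ee]; last 2 first.
  - by rewrite ee eqxx in ne.
  - by rewrite -ee eX in xvX.
  rewrite E0P eE' /=; apply/negP => /imsetP[y _ ee].
  have := indeg fX eX vxX; rewrite ee /= => /(_ erefl) eee.
  by rewrite ee eee eqxx in ne.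
split.
- move=> xvE vxnE.
  have hA a : a \in Delta E' -> (x, v) \notin a.
    by move=> aD; apply/negP => /(notE' _ aD) /E'2; rewrite eqxx.
  have hD : Delta E = Cdec (Delta E') (x, v) ([::] : seq V) (fun _ => (x, v)) (fun _ => set0).
    apply: Cdec_eqP.
    + move=> X /DeltaP[sX fX]; case: (boolP ((x, v) \in X)) => xvX.
        right; left; split => //; apply: inDelta; last by apply: dforest_sub fX; apply: subD1set.
        apply/subsetP => e; rewrite !inE => /andP[ne eX].
        case/Ecase: (subsetP sX _ eX) => [|ee|ee]; rewrite ?E'P //; subst e.
          by move: (subsetP sX _ eX); rewrite (negbTE vxnE).
        by rewrite eqxx in ne.
      left; apply: inDelta fX; apply/subsetP => e eX.
      case/Ecase: (subsetP sX _ eX) => // ee; subst e.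
        by move: (subsetP sX _ eX); rewrite (negbTE vxnE).
      by rewrite eX in xvX.
    + by move=> a; apply: (subsetP (Delta_mono E'E)).
    + by move=> a aD; apply: coneA.
    + by [].
  have [sh hh] := @gen_main _ V (Delta E') (x, v) [::] (fun _ => (x, v)) (fun _ => set0) hA
    (fun y (yy : y \in [::]) _ _ => ltac:(done)) (fun y (yy : y \in [::]) => ltac:(done))
    (fun y (yy : y \in [::]) => ltac:(done)) (fun y y' (yy : y \in [::]) _ _ => ltac:(done)) isT
    Fs (fun _ => [::]) shF (fun y (yy : y \in [::]) => ltac:(done)) _ hD. split; first by move: sh; rewrite /sC /= cats0.
  by move=> i j; rewrite hh big_nil addr0.
- move=> xvnE vxE.
  have hA a : a \in Delta E0 -> (v, x) \notin a.
    by move=> aD; apply/negP => /(notE0 _ aD) /(subsetP E0E') /E'1; rewrite eqxx.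
  have hB y : y \in ys -> forall a, a \in Delta E0 -> (y, x) \notin a.
    by move=> _ a aD; apply/negP => /(notE0 _ aD) /E0nx; rewrite eqxx.
  have hBA y : y \in ys -> Delta (E0 :\ (x, y)) \subset Delta E0.
    by move=> _; apply: Delta_mono; apply: subD1set.
  have hBe y : y \in ys -> (y, x) != (v, x).
    move=> yy; apply/eqP => [[eyv]]; move: yy; rewrite hys => /E'1.
    by rewrite eyv eqxx.
  have hinj : {in ys &, injective (fun y => (y, x))} by move=> y y' _ _ [].
  have hD : Delta E = Cdec (Delta E0) (v, x) ys (fun y => (y, x)) (fun y => Delta (E0 :\ (x, y))).
    apply: Cdec_eqP.
    + move=> X XD; have [sX fX] := DeltaP XD.
      have xvX : (x, v) \notin X by apply/negP => /(subsetP sX); rewrite (negbTE xvnE).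
      case: (boolP ((v, x) \in X)) => vxX.
        by right; left; split => //; apply: vxcase.
      have inE' e : e \in X -> e \in E'.
        move=> eX; case/Ecase: (subsetP sX _ eX) => // ee; subst e.
          by rewrite eX in vxX.
        by rewrite eX in xvX.
      case: (boolP [exists e in X, e.2 == x]) => [/exists_inP[[y x'] yX /= /eqP ex]|nex].
        subst x'; right; right; exists y.
        have yy : y \in ys by rewrite hys inE'.
        split => //; apply: inDelta; last by apply: dforest_sub fX; apply: subD1set.
        apply/subsetP => f; rewrite in_setD1 => /andP[nf fXm].
        have fE' := inE' _ fXm.
        have fE0 : f \in E0.
          rewrite E0P fE' /=; apply/negP => /imsetP[y' _ ef].
          have := indeg fX fXm yX; rewrite ef /= => /(_ erefl) eee.
          by rewrite ef eee eqxx in nf.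
        rewrite in_setD1 fE0 andbT; apply/negP => /eqP ef; subst f.
        by move: (two_cycle fXm yX); rewrite fX.
      left; apply: inDelta fX; apply/subsetP => f fXm; rewrite E0P inE' //=.
      apply/negP => /imsetP[y' _ ef]; move/exists_inP: nex; apply.
      by exists f; rewrite // ef /=.
    + move=> a; apply: (subsetP (Delta_mono _)).
      exact: subset_trans E0E' E'E.
    + by move=> a aD; apply: coneB.
    + move=> y b yy bD; have [sb fb] := DeltaP bD.
      have yxE' : (y, x) \in E' by rewrite -hys.
      have bE0 : forall e, e \in b -> e \in E0.
        by move=> e /(subsetP sb); rewrite inE => /andP[].
      apply: inDelta.
        apply/subsetP => e; rewrite in_setU in_set1 => /orP[/bE0/(subsetP E0E')/(subsetP E'E) //|/eqP->].
        exact: (subsetP E'E _ yxE').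
      apply: add_edge fb _ _; first by move=> e /bE0; apply: E0nx.
      have xy : x != y.
        by apply/eqP => exy; move: (subsetP E'E _ yxE'); rewrite exy (negbTE (noloop y)).
      apply: (tree_cut tree (subsetP E'E _ yxE') xy).
      apply/subsetP => f fb; have := subsetP sb f fb; rewrite in_setD1 => /andP[nfxy fE0].
      rewrite !in_setD1 nfxy (subsetP E'E _ (subsetP E0E' _ fE0)) !andbT.
      apply/negP => /eqP ef; move: (E0nx _ fE0); by rewrite ef eqxx.
  have [sh hh] := @gen_main _ V (Delta E0) (v, x) ys (fun y => (y, x))
    (fun y => Delta (E0 :\ (x, y))) hA hB hBA hBe hinj uys Hs G shH shG _ hD.
  by split.
- move=> xvE vxE.
  have hA a : a \in Delta E' -> (x, v) \notin a.
    by move=> aD; apply/negP => /(notE' _ aD) /E'2; rewrite eqxx.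
  have hB y : y \in [:: x] -> forall a, a \in Delta E' -> (v, x) \notin a.
    by move=> _ a aD; apply/negP => /(notE' _ aD) /E'1; rewrite eqxx.
  have hBA y : y \in [:: x] -> Delta E0 \subset Delta E'.
    by move=> _; apply: Delta_mono.
  have hBe y : y \in [:: x] -> (v, x) != (x, v).
    by move=> _; apply/eqP => [[exv]]; rewrite exv eqxx in xv.
  have hinj : {in [:: x] &, injective (fun _ : V => (v, x))}.
    by move=> y y'; rewrite !inE => /eqP -> /eqP ->.
  have hD : Delta E = Cdec (Delta E') (x, v) [:: x] (fun _ => (v, x)) (fun _ => Delta E0).
    apply: Cdec_eqP.
    + move=> X XD; have [sX fX] := DeltaP XD.
      case: (boolP ((x, v) \in X)) => xvX.
        have vxX : (v, x) \notin X by apply/negP => vxX; move: (two_cycle xvX vxX); rewrite fX.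
        right; left; split => //; apply: inDelta; last by apply: dforest_sub fX; apply: subD1set.
        apply/subsetP => e; rewrite in_setD1 => /andP[ne eX].
        case/Ecase: (subsetP sX _ eX) => // ee; subst e.
          by rewrite eX in vxX.
        by rewrite eqxx in ne.
      case: (boolP ((v, x) \in X)) => vxX.
        right; right; exists x; split => //=; first by rewrite inE.
        exact: vxcase.
      left; apply: inDelta fX; apply/subsetP => e eX.
      case/Ecase: (subsetP sX _ eX) => // ee; subst e.
        by rewrite eX in vxX.
      by rewrite eX in xvX.
    + by move=> a; apply: (subsetP (Delta_mono E'E)).
    + by move=> a aD; apply: coneA.
    + by move=> y b _ bD; apply: coneB.
  have [sh hh] := @gen_main _ V (Delta E') (x, v) [:: x] (fun _ => (v, x))
    (fun _ => Delta E0) hA hB hBA hBe hinj isT Fs (fun _ => Hs) shF (fun _ _ => shH) _ hD.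
  split; first by move: sh; rewrite /sC /= cats0.
  by move=> i j; rewrite hh big_seq1.
Qed.
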